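(* Let $p$ be a prime and $1\le e<p$. For all but finitely many integers $n\ge1$ there exists $c\in\overline{\mathbb{F}_p}$ such that the correspondence $C_c:y^e=x^p+c$ over $\overline{\mathbb{F}_p}$ admits a sequence $x_0=0,x_1,\dots,x_n=0$ with $(x_i,x_{i+1})\in C_c$ for $0\le i<n$, but admits no sequence $x_0=0,x_1,\dots,x_m=0$ with $(x_i,x_{i+1})\in C_c$ for $0\le i<m$ and $1\le m<n$.
   Context: $C_c=\{(a,b)\in\overline{\mathbb{F}_p}^2: b^e=a^p+c\}$. *)

(* Defs.v *)
From HB Require Import structures.
From mathcomp Require Import all_boot all_order all_algebra all_field.
Set Implicit Arguments. Unset Strict Implicit. Unset Printing Implicit Defensive.
Import GRing.Theory.
Local Open Scope ring_scope.

(* Every element of F is algebraic over the prime subfield of F, i.e. is a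
   root of a nonzero polynomial whose coefficients are images of naturals.
   Together with "algebraically closed" and "characteristic p", this
   characterizes F as (a model of) the algebraic closure of F_p. *)
Definition algebraic_over_prime_field (F : fieldType) : Prop :=
  forall x : F, exists q : {poly F},
    [/\ q != 0, (forall i : nat, exists k : nat, q`_i = k%:R) & root q x].

Definition in_Cc (F : fieldType) (p e : nat) (c : F) (a b : F) : Prop :=
  b ^+ e = a ^+ p + c.

Definition Cc_cycle (F : fieldType) (p e : nat) (c : F) (n : nat) : Prop :=
  exists x : nat -> F,
    [/\ x 0%N = 0, x n = 0 & forall i : nat, (i < n)%N -> in_Cc p e c (x i) (x i.+1)].

(* Main.v *)
Require Import Defs.
From HB Require Import structures.
From mathcomp Require Import all_boot all_order all_algebra all_field.
From mathcomp Require Import ring zify.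
From Stdlib Require Import Classical.
Set Implicit Arguments. Unset Strict Implicit. Unset Printing Implicit Defensive.
Import GRing.Theory.
Local Open Scope ring_scope.

Lemma size_undup_bound (T : eqType) (s : seq T) B :
  (forall x, x \in s -> (count_mem x s <= B)%N) -> (size s <= size (undup s) * B)%N.
Proof.
move=> H.
have -> : size s = (\sum_(x <- undup s) count_mem x s)%N.
  rewrite -(perm_size (perm_count_undup s)) size_flatten /shape -map_comp.
  rewrite sumnE big_map; apply: eq_bigr => x _ /=; by rewrite size_nseq.
rewrite -[X in (_ <= X * _)%N]count_predT -sum1_count big_distrl /=.
rewrite big_seq [X in (_ <= X)%N]big_seq; apply: leq_sum => x.
by rewrite mem_undup mul1n => /H.
Qed.

Lemma eventually_exp K a b : (a < b)%N -> exists N, forall t, (N <= t)%N -> (K * a ^ t < b ^ t)%N.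
Proof.
move=> ab.
have bern : forall t, (a ^ t * (a + t) <= a * (a.+1) ^ t)%N.
  elim=> [|t IH]; first by rewrite !expn0 muln1 mul1n addn0.
  rewrite !expnS; move: IH; set x := (a ^ t)%N; set y := (a.+1 ^ t)%N => IH.
  nia.
case: a ab bern => [|a] ab bern.
  exists 1%N => t t1; rewrite exp0n // muln0 expn_gt0; lia.
exists (K * a.+1).+1 => t Ht.
have h1 := bern t.
have h2 : (a.+2 ^ t <= b ^ t)%N by rewrite leq_exp2r //; lia.
have hp : (0 < a.+1 ^ t)%N by rewrite expn_gt0.
nia.
Qed.

Lemma frobB (R : comNzRingType) (p : nat) (x y : R) m : p \in [pchar R] ->
  (x - y) ^+ (p ^ m) = x ^+ (p ^ m) - y ^+ (p ^ m).
Proof.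
move=> hc.
have hn : [pchar R].-nat (p ^ m)%N.
  rewrite (eq_pnat _ (pcharf_eq hc)) pnatX pnat_id //; exact: (pcharf_prime hc).
by rewrite exprDn_pchar // exprNn_pchar.
Qed.

Section Main.
Variables (F : closedFieldType) (p e : nat).
Hypotheses (hp : prime p) (hchar : p \in [pchar F]) (he1 : (1 <= e)%N) (hep : (e < p)%N).

Lemma hcharP : p \in [pchar {poly F}].
Proof. by rewrite (pchar_lalg {poly F}). Qed.

Fixpoint PP k : {poly F} := if k is k'.+1 then PP k' ^+ e - 'X^(p ^ k') else 0.

Lemma PP1 : PP 1 = - 'X.
Proof. by rewrite /= expr0n; case: e he1 => // ?; rewrite expn0 expr1 sub0r. Qed.

Lemma hornerPP k c : (PP k.+1).[c] = (PP k).[c] ^+ e - c ^+ (p ^ k).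
Proof. by rewrite /= !hornerE. Qed.

Lemma size_PP k : size (PP k.+1) = (p ^ k).+1.
Proof.
elim: k => [|k IH]; first by rewrite PP1 size_opp size_polyX expn0.
rewrite [PP _]/= addrC size_addl ?size_opp ?size_polyXn //.
apply: (leq_ltn_trans (size_poly_exp_leq _ _)); rewrite IH /= ltnS.
by rewrite expnS mulnC ltn_pmul2r // expn_gt0 prime_gt0.
Qed.


Lemma cycle_root c m : Cc_cycle p e c m -> (PP m).[c] = 0.
Proof.
case=> x [x0 xm hx].
have H : forall k, (k <= m)%N -> x (m - k)%N ^+ (p ^ k) = (PP k).[c].
  elim=> [|k IH] hk; first by rewrite subn0 xm expn0 expr1 horner0.
  rewrite hornerPP -IH; last exact: ltnW.
  have := hx (m - k.+1)%N ltac:(lia); rewrite /in_Cc.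
  have -> : (m - k.+1).+1 = (m - k)%N by lia.
  move=> E; rewrite expnS exprM.
  have -> : x (m - k.+1)%N ^+ p = x (m - k)%N ^+ e - c by rewrite E addrK.
  by rewrite frobB // exprAC.
have hp0 : (p ^ m != 0)%N by rewrite -lt0n expn_gt0 prime_gt0.
by have := H m (leqnn m); rewrite subnn x0 expr0n (negbTE hp0) => <-.
Qed.

Lemma proot_ex (t : F) : exists w : F, w ^+ p == t.
Proof.
have : size ('X^p - t%:P) != 1%N by rewrite size_XnsubC ?prime_gt0 //; case: p hp => [|[]].
case/closed_rootP => w; rewrite /root !hornerE subr_eq0 => hw; by exists w.
Qed.

Definition proot (t : F) := xchoose (proot_ex t).
Lemma prootP t : proot t ^+ p = t. Proof. exact/eqP/(xchooseP (proot_ex t)). Qed.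

Fixpoint yy (c : F) k := if k is k'.+1 then proot (yy c k' ^+ e - c) else 0.

Lemma yy_pow c k : yy c k ^+ (p ^ k) = (PP k).[c].
Proof.
elim: k => [|k IH]; first by rewrite /= expn0 expr1 horner0.
by rewrite hornerPP -IH /= expnS exprM prootP frobB // exprAC.
Qed.

Lemma root_cycle c n : (PP n).[c] = 0 -> Cc_cycle p e c n.
Proof.
move=> H; exists (fun i => yy c (n - i)); split.
- rewrite subn0; apply/eqP.
  have := yy_pow c n; rewrite H => /eqP; rewrite expf_eq0; by case/andP.
- by rewrite subnn.
- move=> i hi; rewrite /in_Cc.
  have -> : (n - i = (n - i.+1).+1)%N by lia.
  by rewrite /= prootP subrK.
Qed.

Lemma per c d k : (PP d).[c] = 0 -> (PP (d + k)).[c] = (PP k).[c] ^+ (p ^ d).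
Proof.
move=> H; elim: k => [|k IH].
  have hp0 : (p ^ d != 0)%N by rewrite -lt0n expn_gt0 prime_gt0.
  by rewrite addn0 H horner0 expr0n (negbTE hp0).
rewrite addnS !hornerPP IH frobB // exprAC; congr (_ - _).
by rewrite expnD mulnC exprM.
Qed.

Lemma per_mul c d j k : (PP d).[c] = 0 -> (PP (j * d + k)).[c] = (PP k).[c] ^+ (p ^ (j * d)).
Proof.
move=> H; elim: j => [|j IH]; first by rewrite mul0n add0n expn0 expr1.
by rewrite mulSn -addnA per // IH -exprM -expnD addnC.
Qed.

Lemma natp0 k : (0 < k)%N -> ((p ^ k)%N%:R : {poly F}) = 0.
Proof.
move=> hk; rewrite natrX (pcharf0 hcharP) expr0n; case: k hk => //.
Qed.

Lemma e_neq0 : (e%:R : F) != 0.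
Proof. by rewrite -(dvdn_pcharf hchar) gtnNdvd. Qed.

Lemma deriv_PP c k : (0 < k)%N -> (forall j, (0 < j < k)%N -> ~~ root (PP j) c) ->
  (PP k)^`().[c] != 0.
Proof.
elim: k => [//|k IH] _ H.
case: k IH H => [|k] IH H; first by rewrite PP1 derivN derivX hornerN hornerC oppr_eq0 oner_eq0.
have -> : PP k.+2 = PP k.+1 ^+ e - 'X^(p ^ k.+1) by [].
rewrite derivB deriv_exp derivXn -[_ *+ (p ^ k.+1)%N]mulr_natl natp0 // mul0r subr0.
rewrite hornerMn hornerM horner_exp -mulr_natr.
rewrite mulf_neq0 ?mulf_neq0 ?e_neq0 //; first by apply: IH => // j /andP[j0 jk]; apply: H; rewrite j0 ltnS ltnW.
by rewrite expf_neq0 //; apply: H; rewrite ltnS ltnSn.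

Qed.

Lemma mup_exp (r : F) q n : q != 0 -> mup r (q ^+ n) = (mup r q * n)%N.
Proof.
move=> q0; elim: n => [|n IH]; first by rewrite expr0 muln0 mupNroot // root1.
by rewrite exprS mupM ?expf_neq0 // IH mulnS.
Qed.

Lemma mup_add (r : F) a b : a != 0 -> b != 0 -> (mup r b < mup r a)%N ->
  mup r (a + b) = mup r b.
Proof.
move=> a0 b0 lt.
have da : ('X - r%:P) ^+ (mup r b).+1 %| a by rewrite -mup_geq.
have nb : ~~ (('X - r%:P) ^+ (mup r b).+1 %| b) by rewrite -mup_ltn // ltnSn.
have ab0 : a + b != 0.
  apply: contraNneq nb => /eqP; rewrite addr_eq0 => /eqP ha; by rewrite -dvdpNr -ha.
apply/eqP; rewrite eqn_leq mup_leq // mup_geq //.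
rewrite dvdp_addr; last by apply: dvdp_trans da; rewrite dvdp_exp2l.
rewrite nb /=; apply: dvdp_add; last by rewrite -mup_geq.
by apply: dvdp_trans da; rewrite dvdp_exp2l.
Qed.

Lemma mup_simple (r : F) q : q != 0 -> root q r -> ~~ root q^`() r -> mup r q = 1%N.
Proof.
move=> q0 rq dq; apply/eqP; rewrite eqn_leq mup_leq // mup_geq // expr1 dvdp_XsubCl rq andbT.
apply: contra dq => /dvdpP [Q ->].
rewrite /root derivM deriv_exp !hornerE.
rewrite subrr /=.
by rewrite expr1 !mulr0 add0r addr0 mulr0.
Qed.

Lemma key r m d : root (PP m) r -> (forall j, (0 < j < d)%N -> ~~ root (PP j) r) ->
  forall k, (0 < k <= d)%N ->
  exists U, PP (m + k) = PP k ^+ (p ^ m) + PP m ^+ e * U /\ ~~ root U r.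
Proof.
move=> rm hd; elim=> [//|k IH] /andP[_ kd].
case: k IH kd => [|k] IH kd.
  exists 1; split; last by rewrite /root hornerC oner_eq0.
  have hp0 : (p ^ m != 0)%N by rewrite -lt0n expn_gt0 prime_gt0.
  rewrite PP1 -sub0r frobB ?hcharP // expr0n (negbTE hp0).
  by rewrite mulr1 addn1 /= sub0r addrC.
have [U [hU nU]] := IH (ltnW kd).
set a := PP k.+1 ^+ (p ^ m); set b := PP m ^+ e * U.
set S := \sum_(i < e) (a + b) ^+ (e.-1 - i) * a ^+ i.
have hS : (a + b) ^+ e = a ^+ e + b * S.
  have := subrXX (a + b) a e; rewrite addrAC subrr add0r -/S => <-.
  by rewrite addrCA subrr addr0.
exists (U * S); split.
  have -> : PP (m + k.+2) = PP (m + k.+1) ^+ e - 'X^(p ^ (m + k.+1)) by rewrite addnS.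
  have -> : PP k.+2 = PP k.+1 ^+ e - 'X^(p ^ k.+1) by [].
  rewrite hU -/a -/b.
  rewrite hS frobB ?hcharP // -!exprM -expnD (addnC k.+1) (mulnC e) /b; ring.
have hb : b.[r] = 0.
  by rewrite /b hornerM horner_exp (eqP rm) expr0n eqn0Ngt he1 mul0r.
have ha : a.[r] != 0.
  by rewrite /a horner_exp expf_neq0 //; apply: (hd k.+1); rewrite kd.
have hSr : S.[r] = a.[r] ^+ e.-1 *+ e.
  rewrite /S horner_sum (eq_bigr (fun _ => a.[r] ^+ e.-1)).
    by rewrite sumr_const card_ord.
  move=> i _; rewrite hornerM (horner_exp (a + b)) (horner_exp a) hornerD hb addr0 -exprD subnK //.
  by have := ltn_ord i; lia.
rewrite rootM negb_or nU /root hSr -mulr_natr mulf_neq0 ?expf_neq0 //; exact: e_neq0.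
Qed.

Lemma PP_neq0 k : (0 < k)%N -> PP k != 0.
Proof. by case: k => // k _; rewrite -size_poly_gt0 size_PP. Qed.

Lemma root_mul c d j : root (PP d) c -> root (PP (j * d)) c.
Proof.
move=> /eqP H; rewrite /root -[(j * d)%N]addn0 per_mul // horner0 expr0n.
by rewrite expn_eq0 eqn0Ngt prime_gt0.
Qed.

Lemma mult r d : (0 < d)%N -> root (PP d) r -> (forall j, (0 < j < d)%N -> ~~ root (PP j) r) ->
  forall j, (0 < j)%N -> mup r (PP (j * d)) = (e ^ j.-1)%N.
Proof.
move=> d0 rd hd; elim=> [//|j IH] _.
have m1 : mup r (PP d) = 1%N.
  apply: mup_simple => //; first exact: PP_neq0.
  by apply: deriv_PP => // i hi; apply: hd.
case: j IH => [|j] IH; first by rewrite mul1n m1.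
have rm := root_mul (j.+1) rd.
have [U [hU nU]] := @key r _ d rm hd d ltac:(by rewrite d0 leqnn).
have U0 : U != 0 by apply: contraNneq nU => ->; rewrite root0.
have m0 : (0 < j.+1 * d)%N by rewrite muln_gt0 d0.
rewrite mulSnr hU mup_add ?mupMl ?mup_exp ?IH ?PP_neq0 ?expf_neq0 ?mulf_neq0 //.
- by rewrite /= expnS mulnC.
- exact: PP_neq0.
- by rewrite expf_neq0 // PP_neq0.
- rewrite m1 mul1n /= mulnC -expnS.
  apply: (@leq_trans (p ^ j.+1)); first by rewrite ltn_exp2r.
  by apply: leq_pexp2l; [exact: prime_gt0 | rewrite leq_pmulr].
Qed.

Fixpoint QQ h : {poly F} := if h is h'.+1 then QQ h' * PP h'.+1 else 1.

Lemma QQ_neq0 h : QQ h != 0.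
Proof. elim: h => [|h IH]; first by rewrite oner_eq0. by rewrite [QQ _]/QQ -/QQ mulf_neq0 // PP_neq0. Qed.

Lemma size_QQ h : (size (QQ h) <= p ^ h)%N.
Proof.
elim: h => [|h IH]; first by rewrite size_poly1.
rewrite [QQ _]/QQ -/QQ; apply: (leq_trans (size_polyMleq _ _)); rewrite size_PP /= expnS.
have p2 : (2 <= p)%N by exact: prime_gt1.
have : (size (QQ h) + p ^ h <= 2 * p ^ h)%N by lia.
rewrite addnS /= => h1; apply: (leq_trans h1); by rewrite leq_mul2r p2 orbT.
Qed.

Lemma root_QQ h d z : (0 < d <= h)%N -> root (PP d) z -> root (QQ h) z.
Proof.
move=> /andP[d0 dh] rz; elim: h dh => [|h IH] dh; first by move: d0 dh; case: d rz.
have -> : QQ h.+1 = QQ h * PP h.+1 by [].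
rewrite rootM; case: (ltngtP d h.+1) dh => // [dh|hd] _; last by rewrite -hd rz orbT.
by rewrite IH.
Qed.

Lemma period_info n x : (0 < n)%N -> x != 0 -> root (PP n) x ->
  (exists m, (0 < m < n)%N /\ root (PP m) x) ->
  exists d, [/\ (1 < d)%N, (2 * d <= n)%N, (d %| n)%N, root (PP d) x &
     forall j, (0 < j < d)%N -> ~~ root (PP j) x].
Proof.
move=> n0 x0 rn [m [/andP[m0 mn] rm]].
have exP : exists k, (0 < k)%N && root (PP k) x by exists m; rewrite m0.
case: (ex_minnP exP) => d /andP[d0 rd] dmin.
have d1 : d != 1%N.
  apply: contraNneq x0 => d1; move: rd; rewrite d1 PP1 /root hornerN hornerX oppr_eq0.
  done.
have hmin : forall j, (0 < j < d)%N -> ~~ root (PP j) x.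
  move=> j /andP[j0 jd]; apply/negP => rj.
  by have := dmin j; rewrite j0 rj /= => /(_ isT); rewrite leqNgt jd.
have dn : (d %| n)%N.
  have := rn; rewrite /root (divn_eq n d) per_mul ?(eqP rd) // expf_eq0 => /andP[_ rmod].
  apply/dvdnP; exists (n %/ d)%N.
  case: (posnP (n %% d)) => [hz|hp0]; first by rewrite hz addn0.
  by have := dmin _ (introT andP (conj hp0 rmod)); rewrite leqNgt ltn_pmod.
have dm : (d <= m)%N by apply: dmin; rewrite m0.
exists d; split => //; first lia.
move/dvdnP: dn => [q hq]; rewrite hq.
case: q hq => [|[|q]] hq; first by rewrite hq in n0.
  lia.
rewrite leq_mul2r; apply/orP; right; done.
Qed.

Lemma count_main n : (0 < n)%N ->
  (forall c, root (PP n) c -> exists m, (0 < m < n)%N /\ root (PP m) c) ->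
  (p ^ n.-1 <= e ^ n.-1 + p ^ (n %/ 2) * e ^ (n %/ 2))%N.
Proof.
move=> n0 H.
have [rs hrs] := closed_field_poly_normal (PP n).
have lc0 : lead_coef (PP n) != 0 by rewrite lead_coef_eq0 PP_neq0.
have hsize : size rs = (p ^ n.-1)%N.
  have := congr1 (fun q : {poly F} => size q) hrs; rewrite /= size_scale // size_prod_XsubC.
  by rewrite -{1}(prednK n0) size_PP => -[].
have hcnt : forall z, count_mem z rs = mup z (PP n).
  move=> z; rewrite [in RHS]hrs -mul_polyC mupMr ?mu_prod_XsubC //.
  by rewrite /root hornerC.
have hroot : forall z, z \in rs -> root (PP n) z.
  by move=> z zr; rewrite hrs rootZ // root_prod_XsubC.
rewrite -hsize -(count_predC (pred1 0) rs); apply: leq_add.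
  rewrite hcnt -[n in PP n]muln1 mult //; first by rewrite PP1 /root hornerN hornerX oppr0.
  by move=> j /andP[j0 j1]; move: j1; rewrite ltnNge j0.
set s := filter (predC (pred1 0)) rs.
rewrite -size_filter -/s.
apply: (@leq_trans (size (undup s) * e ^ (n %/ 2))).
  apply: size_undup_bound => x xs.
  apply: (@leq_trans (count_mem x rs)); first exact: leq_count_subseq (filter_subseq _ _).
  move: xs; rewrite mem_filter /= => /andP[x0 xr].
  have [d [d1 dn ddv rd hd]] := period_info n0 x0 (hroot x xr) (H x (hroot x xr)).
  have d0 : (0 < d)%N by exact: ltnW.
  rewrite hcnt -{1}(divnK ddv) mult //; last by rewrite divn_gt0 // dvdn_leq.
  apply: leq_pexp2l => //; apply: (leq_trans (leq_pred _)).
  apply: leq_div2l => //.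
rewrite leq_mul2r; apply/orP; right.
have := max_poly_roots (QQ_neq0 (n %/ 2)) (rs := undup s).
move=> /(_ _ (undup_uniq s)) h; rewrite -ltnS; apply: (leq_trans (h _)); first last.
  exact: ltnW (leq_ltn_trans (size_QQ _) (ltnSn _)).
apply/allP => x; rewrite mem_undup mem_filter /= => /andP[x0 xr].
have [d [d1 dn ddv rd hd]] := period_info n0 x0 (hroot x xr) (H x (hroot x xr)).
apply: (root_QQ (d := d)) => //.
have d0 : (0 < d)%N by exact: ltnW.
by rewrite d0 leq_divRL // mulnC.
Qed.
Lemma final : exists N, forall n, (N <= n)%N -> (1 <= n)%N -> exists c : F,
  Cc_cycle p e c n /\ ~ (exists m, [/\ (1 <= m)%N, (m < n)%N & Cc_cycle p e c m]).
Proof.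
have [N1 h1] := eventually_exp 2 hep.
have [N2 h2] := eventually_exp (2 * p) hep.
exists (2 * (N1 + N2)).+2 => n hn n1.
case: (classic (exists c, root (PP n) c /\ forall m, (0 < m < n)%N -> ~~ root (PP m) c)).
  case=> c [rc hc]; exists c; split; first exact: root_cycle (eqP rc).
  case=> m [m1 mn cm]; have := hc m; rewrite m1 mn => /(_ isT).
  by rewrite /root cycle_root // eqxx.
move=> hno; exfalso.
have H : forall c, root (PP n) c -> exists m, (0 < m < n)%N /\ root (PP m) c.
  move=> c rc; apply: NNPP => hm; apply: hno; exists c; split => // m hm'.
  by apply/negP => rm; apply: hm; exists m.
have := count_main n1 H.
set h := (n %/ 2)%N.
have hh : (N2 <= h)%N by rewrite /h leq_divRL //; lia.
have hn1 : (N1 <= n.-1)%N by lia.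
have A := h1 _ hn1.
have B := h2 _ hh.
have C : (p ^ h * p ^ h <= p * p ^ n.-1)%N.
  rewrite -expnD -expnS prednK //; apply: leq_pexp2l; first exact: prime_gt0.
  have := divn_eq n 2; have := ltn_pmod n (isT : (0 < 2)%N); rewrite /h; lia.
have p0 : (0 < p)%N by exact: prime_gt0.
have D : (2 * e ^ h * p ^ h < p ^ n.-1)%N.
  rewrite -(ltn_pmul2l p0); apply: (leq_trans _ C).
  move: B; set X := (e ^ h)%N; set Y := (p ^ h)%N => B; nia.
lia.
Qed.
End Main.

Theorem theorem5p1 (F : closedFieldType) (p e : nat)
  (hp : prime p) (hchar : p \in [pchar F])
  (halg : algebraic_over_prime_field F)
  (he1 : (1 <= e)%N) (hep : (e < p)%N) :
  exists N : nat, forall n : nat, (N <= n)%N -> (1 <= n)%N ->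
    exists c : F, Cc_cycle p e c n /\
      ~ (exists m : nat, [/\ (1 <= m)%N, (m < n)%N & Cc_cycle p e c m]).
Proof. exact: final. Qed.
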